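(* Let $T = \prod_{n\in\omega} T_n \subseteq \omega^\omega$ where each $T_n \subseteq \omega$ has $|T_n| \leq n+1$. Then there exists a strictly increasing $g \in \omega^\omega$ such that for every strictly increasing $f \in T$: $f(n) < g(n)$ for all $n\in\omega$, and for all $m,n\in\omega$, whenever $g(n) \geq f(m)$ we have $g(n+1) > f(m+2)$. *)

(* Defs.v *)
From Stdlib Require Import Arith List.
Import ListNotations.

Definition card_le (S : nat -> Prop) (k : nat) : Prop :=
  exists l : list nat, length l <= k /\ forall x, S x -> In x l.

Definition strictly_increasing (f : nat -> nat) : Prop :=
  forall m n, m < n -> f m < f n.

Definition mem_prod (T : nat -> nat -> Prop) (f : nat -> nat) : Prop :=
  forall n, T n (f n).

(* Main.v *)
Require Import Defs.
From Stdlib Require Import Arith List Lia ClassicalEpsilon.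

Fixpoint Bs (M : nat -> nat) (n : nat) : nat :=
  match n with 0 => M 0 | S k => Bs M k + M (S k) end.

Fixpoint Gs (B : nat -> nat) (n : nat) : nat :=
  match n with 0 => B 0 + 1 | S k => B (Gs B k + k + 3) + Gs B k + 1 end.

Lemma Bs_mono M n m : n <= m -> Bs M n <= Bs M m.
Proof. induction 1; simpl; lia. Qed.

Lemma Bs_ge M n : M n <= Bs M n.
Proof. destruct n; simpl; lia. Qed.

Lemma in_le_max x l : In x l -> x <= list_max l.
Proof.
  intros H. assert (H2 := proj1 (list_max_le l (list_max l)) (le_n _)).
  rewrite Forall_forall in H2. auto.
Qed.

Lemma si_ge f : strictly_increasing f -> forall n, n <= f n.
Proof.
  intros Hf n; induction n. lia. assert (f n < f (S n)) by (apply Hf; lia). lia.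
Qed.

Lemma Gs_si B : strictly_increasing (Gs B).
Proof.
  intros m n H. induction H; simpl; lia.
Qed.

Theorem lemma3p6 (T : nat -> nat -> Prop)
  (hT : forall n, card_le (T n) (S n)) :
  exists g : nat -> nat, strictly_increasing g /\
    forall f : nat -> nat, mem_prod T f -> strictly_increasing f ->
      (forall n, f n < g n) /\
      (forall m n, f m <= g n -> f (m + 2) < g (n + 1)).
Proof.
  set (L := fun n => proj1_sig (constructive_indefinite_description _ (hT n))).
  assert (HL : forall n x, T n x -> In x (L n)).
  { intros n x. unfold L. destruct (constructive_indefinite_description _ (hT n)) as [l Hl].
    simpl. apply Hl. }
  set (M := fun n => list_max (L n)).
  set (B := Bs M).
  assert (HB : forall n x, T n x -> x <= B n).
  { intros n x Hx. unfold B. eapply Nat.le_trans; [|apply Bs_ge].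
    unfold M. apply in_le_max, HL, Hx. }
  exists (Gs B). split. apply Gs_si.
  intros f Hm Hf. split.
  - intros [|k]; simpl.
    + specialize (HB 0 _ (Hm 0)). lia.
    + specialize (HB (S k) _ (Hm (S k))).
      assert (B (S k) <= B (Gs B k + k + 3)) by (apply Bs_mono; lia). lia.
  - intros m n H. rewrite Nat.add_1_r. simpl.
    assert (m <= f m) by (apply si_ge; auto).
    specialize (HB (m+2) _ (Hm (m+2))).
    assert (B (m+2) <= B (Gs B n + n + 3)) by (apply Bs_mono; lia). lia.
Qed.
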